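(* Let $\mathcal{F} = (\mathbb{R}^{d^{L+1}})^{\mathbb{R}^{d^0}}$ with the product topology and usual Borel product $\sigma$-algebra, let $P_{f_n}$ ($n \ge 1$) and $P_f$ be probability distributions on $\mathcal{F}$ with $P_{f_n} \Rightarrow P_f$, let $D = \{(x_i,y_i)\}_{i=1}^m$ be a fixed finite dataset with inputs $\mathcal{X} = \{x_i\}$, and let $\ell \colon \mathbb{R}^{|D| d^{L+1}} \to [0,\infty)$ be a continuous bounded likelihood satisfying the likelihood assumption described in the context, with $\int \ell(f(\mathcal{X}))\,dP_f(f) > 0$. Let $P_{f_n\mid D}$, $P_{f\mid D}$ be the posteriors defined by $\frac{dP_{f_n\mid D}}{dP_{f_n}}(f) = \ell(f(\mathcal{X}))/\int \ell(g(\mathcal{X}))\,dP_{f_n}(g)$ and $\frac{dP_{f\mid D}}{dP_{f}}(f) = \ell(f(\mathcal{X}))/\int \ell(g(\mathcal{X}))\,dP_{f}(g)$. If $h \colon \mathcal{F} \to \mathbb{R}$ is continuous and $\int |h|\, dP_{f_n} \to \int |h| \, dP_f < \infty$, then $$\int h \, dP_{f_n \mid D} \to \int h \, dP_{f\mid D}.$$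
   Context: Here $f(\mathcal{X}) = [f(x)]_{x \in \mathcal{X}} \in \mathbb{R}^{|D| d^{L+1}}$ and $\Rightarrow$ denotes weak convergence ($\int g\,dP_n \to \int g\,dP$ for all continuous bounded real $g$). Likelihood assumption: the targets $\mathcal{Y}=\{y_i\}$ depend on the network parameters and inputs only through the outputs $f_n(\mathcal{X})$; there is a measure $\nu$ with $P_{\mathcal{Y}\mid f_n(\mathcal{X})} \ll \nu$ for every value of $f_n(\mathcal{X})$; and the density $\frac{dP_{\mathcal{Y}\mid f_n(\mathcal{X})}}{d\nu}(\mathcal{Y})$, as a function of $f_n(\mathcal{X})$, equals the same continuous bounded function $\ell$ for all $n$. *)

(* Defs.v *)
From HB Require Import structures.
From mathcomp Require Import all_boot all_order all_algebra.
From mathcomp Require Import all_classical all_reals all_analysis.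
Unset Printing Implicit Defensive.
Import Order.TTheory GRing.Theory Num.Theory.
Import numFieldNormedType.Exports.
Local Open Scope classical_set_scope.
Local Open Scope ring_scope.

(* R^k, as functions 'I_k -> R (product topology = Euclidean topology). *)
Notation vecR R k := {ptws 'I_k -> R} (only parsing).

Notation Fsp R d0 dL1 := {ptws vecR R d0 -> vecR R dL1} (only parsing).

Section defs.
Variable R : realType.

(* Generators of the product sigma-algebra on F: preimages of Borel sets of R
   under the coordinate maps f |-> (f x) j. *)
Definition cyl_gen (d0 dL1 : nat) : set (set (Fsp R d0 dL1)) :=
  [set A | exists (x : vecR R d0) (j : 'I_dL1) (B : set R),
           measurable B /\ A = (fun f : Fsp R d0 dL1 => f x j) @^-1` B].

Definition FM (d0 dL1 : nat) := g_sigma_algebraType (cyl_gen d0 dL1).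

(* f(X) for inputs X = (x_i)_{i < m}: an element of R^{m * dL1}. *)
Definition evalX (d0 dL1 m : nat) (X : 'I_m -> vecR R d0) (f : Fsp R d0 dL1)
  : {ptws 'I_m -> vecR R dL1} := fun i => f (X i).

Definition weak_conv (d0 dL1 : nat) (Pn : nat -> probability (FM d0 dL1) R)
  (P : probability (FM d0 dL1) R) : Prop :=
  forall g : Fsp R d0 dL1 -> R,
    continuous g ->
    measurable_fun (setT : set (FM d0 dL1)) g ->
    (exists M : R, forall f, `|g f| <= M) ->
    (fun n => (\int[Pn n]_f (g f)%:E)%E) @ \oo --> (\int[P]_f (g f)%:E)%E.

(* The likelihood assumption: the targets (a point y of a measurable space Y)
   have conditional law K z given the network outputs z = f(X) (so they depend
   on parameters and inputs only through z); K z << nu for every z, and the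
   density d(K z)/d nu, evaluated at the observed y, is ell z. *)
Definition likelihood_assumption (m dL1 : nat) (dY : measure_display)
  (Y : measurableType dY) (nu : {measure set Y -> \bar R})
  (K : {ptws 'I_m -> vecR R dL1} -> probability Y R) (y : Y)
  (ell : {ptws 'I_m -> vecR R dL1} -> R) : Prop :=
  forall z, K z `<< nu /\
    exists dens : Y -> R,
      measurable_fun setT dens /\ (forall t, 0 <= dens t) /\
      (forall A, measurable A -> K z A = (\int[nu]_(t in A) (dens t)%:E)%E) /\
      dens y = ell z.

Definition is_posterior (d0 dL1 m : nat) (X : 'I_m -> vecR R d0)
  (ell : {ptws 'I_m -> vecR R dL1} -> R) (P : probability (FM d0 dL1) R)
  (Q : {measure set FM d0 dL1 -> \bar R}) : Prop :=
  forall A : set (FM d0 dL1), measurable A ->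
    Q A = (\int[P]_(f in A)
             (ell (evalX _ _ _ X f) / Rintegral P setT (fun g => ell (evalX _ _ _ X g)))%:E)%E.

End defs.

Arguments weak_conv {R d0 dL1} Pn P.
Arguments likelihood_assumption {R m dL1 dY Y} nu K y ell.
Arguments is_posterior {R d0 dL1 m} X ell P Q.
Arguments evalX {R d0 dL1 m} X f _.

(* Main.v *)
Require Import Defs.
From HB Require Import structures.
From mathcomp Require Import all_boot all_order all_algebra.
From mathcomp Require Import all_classical all_reals all_analysis.
Import Order.TTheory GRing.Theory Num.Theory.
Import numFieldNormedType.Exports.
From mathcomp Require Import measurable_realfun.
From mathcomp Require Import lra.
Local Open Scope classical_set_scope.
Local Open Scope ring_scope.

Lemma ptws_cvg (I : Type) (T : topologicalType) (F : set_system (I -> T))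
  {FF : Filter F} (f : {ptws I -> T}) :
  (forall i, (fun g => g i) @ F --> f i) -> F --> f.
Proof.
move=> H.
apply/cvg_sup => i.
move=> A /= HA.
case: HA => B [Bop Bf] BA.
case: Bop => C Cop CB.
have : nbhs (f i) C.
  apply: open_nbhs_nbhs; split => //.
  by rewrite -CB in Bf.
move/H.
rewrite /= nbhs_simpl /= => FC.
apply: filterS FC.
move=> g /= Cg; apply: BA; rewrite -CB; exact: Cg.
Qed.

Section meas.
Variables (R : realType) (d0 dL1 m : nat) (X : 'I_m -> vecR R d0).
Local Notation F := (FM R d0 dL1).
Local Notation Z := {ptws 'I_m -> vecR R dL1}.

Lemma mcoord (x : vecR R d0) (j : 'I_dL1) :
  measurable_fun [set: F] (fun f : F => f x j).
Proof.
move=> _ B mB; rewrite setTI; apply: sub_gen_smallest.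
by exists x, j, B.
Qed.

Definition tq (k : nat) (f : F) : {ffun 'I_m * 'I_dL1 -> int} :=
  [ffun p => Num.floor (k.+1%:R * f (X p.1) p.2)].
Definition vq (k : nat) (t : {ffun 'I_m * 'I_dL1 -> int}) : Z :=
  fun i j => (t (i, j))%:~R / k.+1%:R.

Lemma floor_set_meas (k : nat) (z : int) :
  measurable [set u : R | Num.floor (k.+1%:R * u) = z].
Proof.
have -> : [set u : R | Num.floor (k.+1%:R * u) = z] =
  [set: R] `&` (fun u => k.+1%:R * u) @^-1` `[z%:~R, (z+1)%:~R[.
  apply/seteqP; split => u /=.
    move=> <-; split => //; rewrite in_itv /=; exact: floor_itv.
  by move=> [_]; rewrite in_itv /= => /floor_def.
apply: (measurable_realfun.mulrl_measurable (k.+1%:R)) => //.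
Qed.

Lemma tq_set_meas k t : measurable [set f : F | tq k f = t].
Proof.
have -> : [set f : F | tq k f = t] =
  \bigcap_(p in [set: 'I_m * 'I_dL1])
     ([set: F] `&` (fun f : F => f (X p.1) p.2) @^-1`
        [set u : R | Num.floor (k.+1%:R * u) = t p]).
  apply/seteqP; split => f /=.
    by move=> <- p _; split => //=; rewrite /tq ffunE.
  move=> H; apply/ffunP => p; rewrite /tq ffunE.
  by have [_ ->] := H p I.
apply: fin_bigcap_measurable; first exact: finite_finset.
move=> p _; apply: mcoord => //; exact: floor_set_meas.
Qed.

Lemma gq_meas (ell : Z -> R) k :
  measurable_fun [set: F] (fun f => ell (vq k (tq k f))).
Proof.
move=> _ B mB.
have -> : [set: F] `&` (fun f => ell (vq k (tq k f))) @^-1` B =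
  \bigcup_(t : {ffun 'I_m * 'I_dL1 -> int})
     ([set f : F | tq k f = t] `&` [set _ : F | B (ell (vq k t))]).
  apply/seteqP; split => f /=.
    by move=> [_ Bf]; exists (tq k f) => //.
  by move=> [t _ [<- ?]].
apply: countable_bigcupT_measurable; first exact: countableP.
move=> t; case: (pselect (B (ell (vq k t)))) => Bt.
  have -> : [set _ : F | B (ell (vq k t))] = setT by apply/seteqP; split.
  by rewrite setIT; exact: tq_set_meas.
have -> : [set _ : F | B (ell (vq k t))] = set0 by apply/seteqP; split.
by rewrite setI0.
Qed.


Lemma quant_cvg (u : R) :
  (fun k : nat => (Num.floor (k.+1%:R * u))%:~R / k.+1%:R) @ \oo --> u.
Proof.
apply/cvgrPdist_le => e e0.
have := cvg_harmonic (R := R).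
move/cvgrPdist_le.
move=> /(_ e e0). 
move=> [N _ HN].
exists N => // k /= Nk.
have k0 : (0 : R) < k.+1%:R by rewrite ltr0n.
have := HN k Nk; rewrite /= sub0r normrN ger0_norm ?invr_ge0 ?ler0n //.
apply: le_trans.
have /andP[h1 h2] := floor_itv (k.+1%:R * u).
rewrite ger0_norm; last first.
  by rewrite subr_ge0 ler_pdivrMr // [u * _]mulrC.
rewrite -(ler_pM2r k0) mulrBl mulfVK ?gt_eqF // mulVf ?gt_eqF // [u * _]mulrC.
rewrite lerBlDr; rewrite intrD addrC in h2; exact: ltW.
Qed.

Lemma vq_cvg (f : F) : (fun k => vq k (tq k f)) @ \oo --> (evalX X f : Z).
Proof.
apply: ptws_cvg => i.
apply: ptws_cvg => j.
rewrite /vq /tq /=.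
move=> A HA; have := quant_cvg (f (X i) j) A HA.
move=> [N _ HN]; exists N => // k Nk; rewrite /= ffunE; exact: HN.
Qed.

Lemma ell_meas (ell : Z -> R) : continuous ell ->
  measurable_fun [set: F] (fun f => ell (evalX X f)).
Proof.
move=> ellc.
apply: (measurable_realfun.measurable_fun_cvg (h := fun k f => ell (vq k (tq k f)))).
  by move=> k; exact: gq_meas.
move=> f _.
exact: (continuous_cvg _ (ellc _) (vq_cvg f)).
Qed.

End meas.

Lemma ptws_proj (I : Type) (T : topologicalType) (i : I) :
  continuous (fun f : {ptws I -> T} => f i).
Proof.
move=> f.
have /cvg_sup/(_ i) h : (nbhs f) --> f by exact: cvg_id.
move=> A Ai.
have := @initial_continuous _ T (fun g : {ptws I -> T} => g i) f A Ai.
move/h; done.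
Qed.

Lemma evalX_cont (R : realType) d0 dL1 m (X : 'I_m -> vecR R d0) :
  continuous (fun f : Fsp R d0 dL1 => (evalX X f : {ptws 'I_m -> vecR R dL1})).
Proof.
move=> f.
have FF : Filter ((fun f : Fsp R d0 dL1 => (evalX X f : {ptws 'I_m -> vecR R dL1})) @ nbhs f) by exact: fmap_filter.
apply: ptws_cvg => i; apply: ptws_cvg => j.
have c1 := continuous_comp (@ptws_proj _ _ (X i) f) (@ptws_proj _ _ j (f (X i))).
move=> A HA; exact: (c1 A HA).
Qed.

Import HBNNSimple.

Section dens.
Context d (T : measurableType d) (R : realType).
Variables (mu nu : {measure set T -> \bar R}) (g : T -> R).
Hypothesis g0 : forall x, 0 <= g x.
Hypothesis mg : measurable_fun setT g.
Hypothesis nuE : forall A, measurable A -> nu A = (\int[mu]_(x in A) (g x)%:E)%E.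

Lemma dens_cov (f : T -> \bar R) E : (forall x, (0 <= f x)%E) ->
    measurable E -> measurable_fun E f ->
  (\int[mu]_(x in E) (f x * (g x)%:E) = \int[nu]_(x in E) f x)%E.
Proof.
move=> f0 mE mf.
have mgE : measurable_fun E (EFin \o g).
  by apply/measurable_EFinP; exact: measurable_funTS.
pose h := nnsfun_approx mE mf.
have -> : (\int[nu]_(x in E) f x =
    lim (\int[nu]_(x in E) (EFin \o h n) x @[n --> \oo]))%E.
  have fE x : E x -> f x = lim ((EFin \o h n) x @[n --> \oo]).
    by move=> Ex; apply/esym/cvg_lim => //; exact: cvg_nnsfun_approx.
  under eq_integral => x /[!inE] /fE -> //.
  apply: monotone_convergence => //.
  - move=> n; apply/measurable_EFinP.
    by apply: (measurable_funS measurableT) => //; exact/measurable_funP.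
  - by move=> n x Ex //=; rewrite lee_fin.
  - by move=> x Ex a b ab; rewrite lee_fin; exact/lefP/nd_nnsfun_approx.
have -> : (\int[mu]_(x in E) (f x * (g x)%:E) =
    lim (\int[mu]_(x in E) ((EFin \o h n) x * (g x)%:E) @[n --> \oo]))%E.
  have fg x : E x -> (f x * (g x)%:E = lim (((EFin \o h n) x * (g x)%:E) @[n --> \oo]))%E.
    by move=> Ex; apply/esym/cvg_lim => //; apply: cvgeZr;
      [by []|exact: cvg_nnsfun_approx].
  under eq_integral => x /[!inE] /fg -> //.
  apply: monotone_convergence => [//| | |].
  - move=> n; apply/emeasurable_funM => //; apply/measurable_funTS.
      exact/measurable_EFinP.
  - by move=> n x Ex /=; rewrite mule_ge0 ?lee_fin.
  - by move=> x Ex a b ab/=; rewrite lee_wpmul2r ?lee_fin//; exact/lefP/nd_nnsfun_approx.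
suff suf n : (\int[mu]_(x in E) ((EFin \o h n) x * (g x)%:E) =
    \int[nu]_(x in E) (EFin \o h n) x)%E.
  by under eq_fun do rewrite suf.
transitivity (\int[nu]_(x in E)
   (\sum_(y \in range (h n)) (y * \1_(h n @^-1` [set y]) x)%:E))%E; last first.
  by apply: eq_integral => t tE; rewrite /= fimfunE -fsumEFin.
have indich m r : measurable_fun E (fun x => (r * \1_(h m @^-1` [set r]) x)%:E).
  by apply: (measurable_comp measurableT) => //; exact: measurable_funM.
rewrite ge0_integral_fsum//; last by move=> m y Ey; exact: nnfun_muleindic_ge0.
transitivity (\int[mu]_(x in E) (\sum_(y \in range (h n))
    (y * \1_(h n @^-1` [set y]) x)%:E * (g x)%:E))%E.
  under [RHS]eq_integral => x xE.
    rewrite -ge0_mule_fsuml => [|y]; last exact: nnfun_muleindic_ge0.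
    rewrite fsumEFin // -(fimfunE _ x); over.
  by [].
rewrite ge0_integral_fsum//; last 2 first.
  - move=> y; apply: emeasurable_funM => //.
  - move=> m y Ey.
    apply: mule_ge0; [exact: nnfun_muleindic_ge0|by rewrite lee_fin].
apply: eq_fsbigr => r rhn.
under [RHS]eq_integral do rewrite EFinM.
rewrite integralZl_indic_nnsfun => //.
under eq_integral do rewrite EFinM -muleA.
rewrite ge0_integralZl//.
- under eq_integral do rewrite muleC.
  rewrite (eq_integral ((EFin \o g) \_ (h n @^-1` [set r]))); last first.
    by move=> x xE; rewrite epatch_indic.
  by rewrite -integral_mkcondr -nuE// integral_indic// setIC.
- apply: emeasurable_funM => //; exact/measurable_EFinP.
- by move=> t Et; rewrite mule_ge0 ?lee_fin.
- by move: rhn; rewrite inE => -[t _ <-]; rewrite lee_fin.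
Qed.


Lemma dens_signed (f : T -> R) : measurable_fun setT f ->
  (\int[nu]_x (f x)%:E = \int[mu]_x (f x * g x)%:E)%E.
Proof.
move=> mf.
have mf' : measurable_fun setT (EFin \o f) by exact/measurable_EFinP.
rewrite integralE [RHS]integralE.
rewrite -(@dens_cov ((EFin \o f)^\+)%E) //; last exact: measurable_funepos.
rewrite -(@dens_cov ((EFin \o f)^\-)%E) //; last exact: measurable_funeneg.
congr (_ - _)%E; apply: eq_integral => x _;
  rewrite ?funeposE ?funenegE /= -?EFinN -!EFin_max -EFinM; congr EFin;
  have gx := g0 x; rewrite !maxEle.
- by case: (leP (f x * g x) 0); case: (leP (f x) 0) => h1 h2; nra.
- by case: (leP (- (f x * g x)) 0); case: (leP (- f x) 0) => h1 h2; nra.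
Qed.

End dens.

Lemma ptw (R : realType) (u v c : R) : `|u| <= v -> 0 <= c ->
  `|u - Num.max (- c) (Num.min u c)| <= v - Num.min v c.
Proof.
rewrite ler_norml => /andP[h1 h2] c0; rewrite ler_norml.
rewrite !minEle; case: (leP u c) => h3; case: (leP v c) => h4 /=;
rewrite maxEle.
- case: (leP (- c) u) => h5; apply/andP; split; lra.
- case: (leP (- c) u) => h5; apply/andP; split; lra.
- case: (leP (- c) c) => h5; apply/andP; split; lra.
- case: (leP (- c) c) => h5; apply/andP; split; lra.
Qed.

Section core.
Variables (R : realType) (d0 dL1 : nat).
Local Notation F := (FM R d0 dL1).

Lemma intb (mu : probability F R) (phi : F -> R) K :
  measurable_fun setT phi -> (forall x, `|phi x| <= K) ->
  mu.-integrable setT (EFin \o phi).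
Proof.
move=> mphi hK; apply/integrableP; split; first exact/measurable_EFinP.
apply: (@le_lt_trans _ _ (\int[mu]_(x in setT) (cst K%:E) x)%E).
  apply: ge0_le_integral => //.
  - by apply/measurable_EFinP; exact: measurableT_comp.
  - by move=> x _ /=; rewrite lee_fin.
rewrite integral_cst //; set t := (X in (_ * X)%E).
have -> : t = 1%E by rewrite /t; exact: probability_setT.
by rewrite mule1 ltry.
Qed.

Lemma intH (mu : probability F R) (H : F -> R) :
  measurable_fun setT H -> (forall x, 0 <= H x) ->
  (\int[mu]_x (H x)%:E < +oo)%E -> mu.-integrable setT (EFin \o H).
Proof.
move=> mH H0 HI; apply/integrableP; split; first exact/measurable_EFinP.
by under eq_integral => x _ do rewrite /= ger0_norm //.
Qed.

Lemma intdom (mu : probability F R) (phi H : F -> R) :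
  measurable_fun setT phi -> (forall x, `|phi x| <= H x) ->
  mu.-integrable setT (EFin \o H) -> mu.-integrable setT (EFin \o phi).
Proof.
move=> mphi hH iH; apply: le_integrable iH => //; first exact/measurable_EFinP.
move=> x _ /=; rewrite lee_fin (le_trans (hH x)) //.
exact: ler_norm.
Qed.


Local Notation G := (Fsp R d0 dL1).

Lemma intB (mu : probability F R) (f1 f2 : F -> R) :
  mu.-integrable setT (EFin \o f1) -> mu.-integrable setT (EFin \o f2) ->
  mu.-integrable setT (EFin \o (fun x => f1 x - f2 x)).
Proof.
move=> i1 i2; have := integrableB measurableT i1 i2.
by apply: eq_integrable => // x _ /=; rewrite EFinB.
Qed.

Lemma trunc_bound (mu : probability F R) (H g : F -> R) (c : R) :
  measurable_fun setT H -> measurable_fun setT g ->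
  (forall x, `|g x| <= H x) -> 0 <= c ->
  mu.-integrable setT (EFin \o H) ->
  `|Rintegral mu setT g - Rintegral mu setT (fun x => Num.max (- c) (Num.min (g x) c))|
  <= Rintegral mu setT H - Rintegral mu setT (fun x => Num.min (H x) c).
Proof.
move=> mH mg gH c0 iH.
set Tg := fun x => Num.max (- c) (Num.min (g x) c).
set psi := fun x => Num.min (H x) c.
have mTg : measurable_fun setT Tg.
  apply: measurable_maxr; first exact: measurable_cst.
  apply: measurable_minr => //; exact: measurable_cst.
have mpsi : measurable_fun setT psi.
  apply: measurable_minr => //; exact: measurable_cst.
have H0 x : 0 <= H x by apply: le_trans (gH x).
have iTg : mu.-integrable setT (EFin \o Tg).
  apply: (@intb mu Tg c mTg) => x; rewrite /Tg ler_norml; apply/andP; split.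
    by rewrite le_max lexx.
  by rewrite ge_max; apply/andP; split; [lra|rewrite ge_min lexx orbT].
have ipsi : mu.-integrable setT (EFin \o psi).
  apply: (@intb mu psi c mpsi) => x; rewrite /psi ger0_norm.
    by rewrite ge_min lexx orbT.
  by rewrite le_min H0.
have ig := @intdom mu g H mg gH iH.
rewrite -RintegralB // -RintegralB //.
apply: le_trans (le_normr_Rintegral _ _) _ => //; first exact: intB.
apply: le_Rintegral => //.
- exact/integrable_norm/intB.
- exact: intB.
- by move=> x _; exact: ptw.
Qed.

Lemma wc_real (Pn : nat -> probability F R) (P : probability F R)
  (wc : weak_conv Pn P) (phi : G -> R) K :
  continuous phi -> measurable_fun (setT : set F) phi ->
  (forall x, `|phi x| <= K) ->
  (fun n => Rintegral (Pn n) setT phi) @ \oo --> Rintegral P setT phi.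
Proof.
move=> pc pm pK.
have := wc phi pc pm (ex_intro _ K pK).
rewrite -(fineK (integrable_fin_num _ (@intb P phi K pm pK))) //.
by move/fine_cvgP => [_].
Qed.


Lemma core (Pn : nat -> probability F R) (P : probability F R) (H g : G -> R) :
  weak_conv Pn P ->
  continuous H -> measurable_fun (setT : set F) H -> (forall x, 0 <= H x) ->
  (fun n => \int[Pn n]_f (H f)%:E)%E @ \oo --> (\int[P]_f (H f)%:E)%E ->
  (\int[P]_f (H f)%:E < +oo)%E ->
  continuous g -> measurable_fun (setT : set F) g -> (forall x, `|g x| <= H x) ->
  (fun n => \int[Pn n]_f (g f)%:E)%E @ \oo --> (\int[P]_f (g f)%:E)%E.
Proof.
move=> wc Hc Hm H0 HPn HP gc gm gH.
have iHP := @intH P H Hm H0 HP.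
have igP := @intdom P g H gm gH iHP.
rewrite -(fineK (integrable_fin_num _ iHP)) // in HPn.
move/fine_cvgP: HPn => [HPnfin HPnc].
have iHPn : \forall n \near \oo, (Pn n).-integrable setT (EFin \o H).
  apply: filterS HPnfin => n fn; apply: intH => //.
  by move/fin_numPlt : fn => /andP[].
pose psi (k : nat) x := Num.min (H x) k%:R.
pose Tg (k : nat) x := Num.max (- k%:R) (Num.min (g x) k%:R).
have psic k : continuous (psi k).
  apply: min_fun_continuous => //; exact: cst_continuous.
have Tgc k : continuous (Tg k).
  apply: max_fun_continuous; first exact: cst_continuous.
  apply: min_fun_continuous => //; exact: cst_continuous.
have psim k : measurable_fun (setT : set F) (psi k).
  apply: measurable_minr => //; exact: measurable_cst.
have Tgm k : measurable_fun (setT : set F) (Tg k).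
  apply: measurable_maxr; first exact: measurable_cst.
  apply: measurable_minr => //; exact: measurable_cst.
have psib k x : `|psi k x| <= k%:R.
  rewrite /psi ger0_norm; first by rewrite ge_min lexx orbT.
  by rewrite le_min H0 ler0n.
have Tgb k x : `|Tg k x| <= k%:R.
  rewrite /Tg ler_norml; apply/andP; split; first by rewrite le_max lexx.
  rewrite ge_max; apply/andP; split; last by rewrite ge_min lexx orbT.
  by have := ler0n R k; lra.
have wpsi k := @wc_real Pn P wc (psi k) k%:R (psic k) (psim k) (psib k).
have wTg k := @wc_real Pn P wc (Tg k) k%:R (Tgc k) (Tgm k) (Tgb k).
have mc : (fun k => Rintegral P setT (psi k)) @ \oo --> Rintegral P setT H.
  have := @cvg_monotone_convergence _ F R P setT measurableT
    (fun k x => (psi k x)%:E) _ _ _.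
  move=> /(_ _ _ _) mcv.
  have h1 k : measurable_fun (setT : set F) (fun x : F => (psi k x)%:E).
    exact/measurable_EFinP.
  have h2 k (x : F) : [set: F] x -> (0 <= (psi k x)%:E)%E.
    by move=> _; rewrite lee_fin le_min H0 ler0n.
  have h3 (x : F) : [set: F] x -> {homo (fun k => (psi k x)%:E) : a b / (a <= b)%N >-> (a <= b)%E}.
    move=> _ a b ab; rewrite lee_fin /psi le_min; apply/andP; split.
      by rewrite ge_min lexx.
    by rewrite ge_min ler_nat ab orbT.
  have {h1 h2 h3}mcv := mcv h1 h2 h3.
  have lE : (fun x => limn (fun k => (psi k x)%:E)) = (fun x => (H x)%:E).
    apply/funext => x; apply: cvg_lim => //; apply: cvg_near_cst.
    exists (Num.trunc (H x)).+1 => // k /= hk; congr EFin; rewrite /psi; apply/min_l.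
    apply: le_trans (ltW (truncnS_gt _)) _; by rewrite ler_nat.
  rewrite lE -(fineK (integrable_fin_num _ iHP)) // in mcv.
  by move/fine_cvgP: mcv => [_].
rewrite -(fineK (integrable_fin_num _ igP)) //.
apply/fine_cvgP; split.
  apply: filterS iHPn => n i; apply: integrable_fin_num => //.
  exact: (@intdom (Pn n) g H gm gH i).
apply/cvgrPdist_le => e e0.
have e5 : 0 < e / 5 by rewrite divr_gt0.
have /cvgrPdist_le /(_ _ e5) [K _ HK] := mc.
have hK := HK K (leqnn K); rewrite /= in hK.
have /cvgrPdist_le /(_ _ e5) w1 := HPnc.
have /cvgrPdist_le /(_ _ e5) w2 := wpsi K.
have /cvgrPdist_le /(_ _ e5) w3 := wTg K.
have tbP := @trunc_bound P H g K%:R Hm gm gH (ler0n _ _) iHP.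
near=> n.
have i : (Pn n).-integrable setT (EFin \o H) by near: n.
have h1 : `|Rintegral P setT H - Rintegral (Pn n) setT H| <= e / 5.
  by near: n; exact: w1.
have h2 : `|Rintegral P setT (psi K) - Rintegral (Pn n) setT (psi K)| <= e / 5.
  by near: n.
have h3 : `|Rintegral P setT (Tg K) - Rintegral (Pn n) setT (Tg K)| <= e / 5.
  by near: n.
have tbn := @trunc_bound (Pn n) H g K%:R Hm gm gH (ler0n _ _) i.
change (`|Rintegral P setT g - Rintegral (Pn n) setT g| <= e).
move: hK h1 h2 h3 tbP tbn; rewrite /psi /Tg.
set a := Rintegral P setT H.
set an := Rintegral (Pn n) setT H.
set b := Rintegral P setT _.
set bn := Rintegral (Pn n) setT (fun x => Num.min (H x) K%:R).
set c := Rintegral P setT _.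
set cn := Rintegral (Pn n) setT (fun x => Num.max _ _).
set gP := Rintegral P setT g.
set gn := Rintegral (Pn n) setT g.
rewrite !ler_norml => /andP[? ?] /andP[? ?] /andP[? ?] /andP[? ?] /andP[? ?] /andP[? ?].
apply/andP; split; lra.
Unshelve. all: end_near.
Qed.

End core.

Theorem corollary1 (R : realType) (d0 dL1 m : nat)
  (Pn : nat -> probability (FM R d0 dL1) R) (P : probability (FM R d0 dL1) R)
  (X : 'I_m -> vecR R d0)
  (dY : measure_display) (Y : measurableType dY) (y : Y)
  (nu : {measure set Y -> \bar R})
  (K : {ptws 'I_m -> vecR R dL1} -> probability Y R)
  (ell : {ptws 'I_m -> vecR R dL1} -> R)
  (Qn : nat -> {measure set FM R d0 dL1 -> \bar R})
  (Q : {measure set FM R d0 dL1 -> \bar R})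
  (h : Fsp R d0 dL1 -> R) :
  weak_conv Pn P ->
  continuous ell ->
  (forall z, 0 <= ell z) ->
  (exists M : R, forall z, ell z <= M) ->
  likelihood_assumption nu K y ell ->
  (0 < \int[P]_f (ell (evalX X f))%:E)%E ->
  (forall n, is_posterior X ell (Pn n) (Qn n)) ->
  is_posterior X ell P Q ->
  continuous h ->
  measurable_fun (setT : set (FM R d0 dL1)) h ->
  (fun n => \int[Pn n]_f (`|h f|)%:E)%E @ \oo --> (\int[P]_f (`|h f|)%:E)%E ->
  (\int[P]_f (`|h f|)%:E < +oo)%E ->
  (fun n => \int[Qn n]_f (h f)%:E)%E @ \oo --> (\int[Q]_f (h f)%:E)%E.
Proof.
move=> wc ellc ell0 [M ellM] _ Lpos Qn_post Q_post hc hm habs hfin.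
pose L := fun f : Fsp R d0 dL1 => ell (evalX X f).
have Lm : measurable_fun (setT : set (FM R d0 dL1)) L := @ell_meas R d0 dL1 m X ell ellc.
have Lc : continuous L.
  by move=> f; exact: (continuous_comp (@evalX_cont R d0 dL1 m X f) (ellc _)).
have M0 : 0 <= M := le_trans (ell0 (fun _ _ => 0)) (ellM _).
have Lb f : `|L f| <= M by rewrite /L ger0_norm ?ellM ?ell0.
have L0 f : 0 <= L f by exact: ell0.
have wL := @wc_real R d0 dL1 Pn P wc L M Lc Lm Lb.
have iLP := @intb R d0 dL1 P L M Lm Lb.
pose Z := Rintegral P setT L.
pose Zn n := Rintegral (Pn n) setT L.
have fE : (\int[P]_f (L f)%:E = Z%:E)%E.
  rewrite /Z /Rintegral fineK //; exact: integrable_fin_num.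
have Z0 : 0 < Z by rewrite -lte_fin -fE.
have Zn0 n : 0 <= Zn n by apply: Rintegral_ge0 => x _; exact: L0.
have EQ : (\int[Q]_f (h f)%:E = \int[P]_f (h f * (L f / Z))%:E)%E.
  apply: dens_signed => //.
  - by move=> x; rewrite divr_ge0 // ltW.
  - by apply: measurable_funM => //; exact: measurable_cst.
have EQn n : (\int[Qn n]_f (h f)%:E = \int[Pn n]_f (h f * (L f / Zn n))%:E)%E.
  apply: dens_signed => //.
  - by move=> x; rewrite divr_ge0.
  - by apply: measurable_funM => //; exact: measurable_cst.
  - exact: Qn_post.
pose hL := fun f => h f * L f.
pose H := fun f => M * `|h f|.
have hLc : continuous hL by move=> f; exact: (continuousM (hc f) (Lc f)).
have hLm : measurable_fun (setT : set (FM R d0 dL1)) hL.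
  exact: measurable_funM.
have Hc : continuous H.
  move=> f.
  have c1 : {for f, continuous (fun f : Fsp R d0 dL1 => `|h f|)}.
    exact: (continuous_comp (hc f) (@norm_continuous _ _ _)).
  exact: (continuousM (@cst_continuous _ _ M f) c1).
have nhm : measurable_fun (setT : set (FM R d0 dL1)) (fun f => `|h f|).
  exact: measurableT_comp.
have Hm : measurable_fun (setT : set (FM R d0 dL1)) H.
  by apply: measurable_funM => //; exact: measurable_cst.
have H0 f : 0 <= H f by rewrite /H mulr_ge0.
have hLb f : `|hL f| <= H f.
  by rewrite /hL /H normrM mulrC ler_wpM2r // Lb.
have HZ (mu : probability (FM R d0 dL1) R) :
    (\int[mu]_f (H f)%:E = M%:E * \int[mu]_f `|h f|%:E)%E.
  under eq_integral do rewrite EFinM.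
  apply: ge0_integralZl_EFin => //.
  exact/measurable_EFinP.
have HPn : (fun n => \int[Pn n]_f (H f)%:E)%E @ \oo --> (\int[P]_f (H f)%:E)%E.
  have -> : (fun n => \int[Pn n]_f (H f)%:E)%E =
    (fun n => M%:E * \int[Pn n]_f `|h f|%:E)%E by apply/funext => n; exact: HZ.
  rewrite HZ; exact: cvgeZl.
have HP : (\int[P]_f (H f)%:E < +oo)%E.
  by rewrite HZ; apply: lte_mul_pinfty => //; rewrite lee_fin.
have chL := @core R d0 dL1 Pn P H hL wc Hc Hm H0 HPn HP hLc hLm hLb.
have scal (mu : probability (FM R d0 dL1) R) (c : R) :
    mu.-integrable setT (EFin \o hL) ->
    (\int[mu]_f (h f * (L f / c))%:E = (c^-1 * Rintegral mu setT hL)%:E)%E.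
  move=> ihL.
  transitivity (\int[mu]_f ((c^-1)%:E * (hL f)%:E))%E.
    by apply: eq_integral => f _; rewrite -EFinM /hL; congr EFin; rewrite mulrA; exact: mulrC.
  rewrite integralZl // EFinM /Rintegral fineK //; exact: integrable_fin_num.
have iHP := @intH R d0 dL1 P H Hm H0 HP.
have ihLP := @intdom R d0 dL1 P hL H hLm hLb iHP.
have fhE : (\int[P]_f (hL f)%:E = (Rintegral P setT hL)%:E)%E.
  rewrite /Rintegral fineK //; exact: integrable_fin_num.
rewrite fhE in chL.
move/fine_cvgP: chL => [_ chL].
have habs' := habs.
rewrite -(fineK (integrable_fin_num _ (@intH R d0 dL1 P (fun f => `|h f|) nhm (fun f => normr_ge0 _) hfin))) // in habs'.
move/fine_cvgP: habs' => [hfinn _].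
have ihLn : \forall n \near \oo, (Pn n).-integrable setT (EFin \o hL).
  apply: filterS hfinn => n fn.
  apply: (@intdom R d0 dL1 (Pn n) hL H hLm hLb).
  apply: (@intH R d0 dL1 (Pn n) H Hm H0).
  rewrite HZ; apply: lte_mul_pinfty => //.
  by move/fin_numPlt : fn => /andP[].
have key : (fun n => ((Zn n)^-1 * Rintegral (Pn n) setT hL)%:E) @ \oo -->
    (Z^-1 * Rintegral P setT hL)%:E.
  apply/fine_cvgP; split; first exact: nearW.
  apply: cvgM => //; apply: cvgV => //; by rewrite gt_eqF.
rewrite EQ scal //.
apply: cvg_trans _ key.
apply: near_eq_cvg.
near=> n.
rewrite EQn scal //.
by near: n.
Unshelve. all: end_near.
Qed.
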